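(* Let $\mathbf{k}$ be a field, $Q$ a finite connected quiver, $\Lambda=\mathbf{k}Q/\mathcal{J}^2$ ($\mathcal{J}$ the arrow ideal), $n\ge2$, and assume $\mathcal{C}\subseteq\operatorname{mod}\Lambda$ is an $n$-cluster tilting subcategory. (a) If $w_1\to v\leftarrow w_2$ is a subquiver of $Q$ (two distinct arrows ending at $v$), then $\delta^+(w_1)=\delta^+(w_2)=1$. (b) If $u_1\leftarrow v\to u_2$ is a subquiver of $Q$ (two distinct arrows starting at $v$), then $\delta^-(u_1)=\delta^-(u_2)=1$.
   Context: Modules are finite-dimensional right modules. $\mathcal{C}$ is $n$-cluster tilting if it is functorially finite and $\mathcal{C}=\{X\mid \operatorname{Ext}^i(X,\mathcal{C})=0\ \forall 0<i<n\}=\{X\mid\operatorname{Ext}^i(\mathcal{C},X)=0\ \forall 0<i<n\}$. $\delta^-(v)$, $\delta^+(v)$ are the numbers of arrows ending, resp. starting, at $v$. *)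

(* Defs.v *)
From HB Require Import structures.
From mathcomp Require Import all_boot all_order all_algebra.
Set Implicit Arguments. Unset Strict Implicit. Unset Printing Implicit Defensive.
Import GRing.Theory.
Local Open Scope ring_scope.

(* Lambda = kQ / J^2 is the k-algebra generated by idempotents e_v (v in V)
   and arrows x_a (a in A) subject to
     e_v e_w = delta_{vw} e_v,  sum_v e_v = 1,  e_{src a} x_a e_{tgt a} = x_a,
     x_a x_b = 0  (all paths of length 2 vanish).
   A finite-dimensional right Lambda-module of dimension N is an algebra map
   Lambda -> 'M_N acting on row vectors from the right (m . lambda = m *m R(lambda)). *)

Section QuiverModules.
Variables (F : fieldType) (V A : finType) (src tgt : A -> V).

Record rmod := RMod { mdim : nat; midem : V -> 'M[F]_mdim; marr : A -> 'M[F]_mdim }.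

Definition is_mod (M : rmod) : Prop :=
  [/\ (forall v w, midem M v *m midem M w = if v == w then midem M v else 0),
      \sum_(v : V) midem M v = 1%:M,
      (forall a, midem M (src a) *m marr M a *m midem M (tgt a) = marr M a)
    & (forall a b, marr M a *m marr M b = 0)].

Definition is_hom (M N : rmod) (H : 'M[F]_(mdim M, mdim N)) : Prop :=
  (forall v, midem M v *m H = H *m midem N v) /\
  (forall a, marr M a *m H = H *m marr N a).

Definition is_projective (P : rmod) : Prop :=
  is_mod P /\
  forall (M N : rmod) (g : 'M[F]_(mdim M, mdim N)) (h : 'M[F]_(mdim P, mdim N)),
    is_mod M -> is_mod N -> is_hom g -> row_full g -> is_hom h ->
    exists l : 'M[F]_(mdim P, mdim M), is_hom l /\ h = l *m g.

(* projective resolution  ... -> P_2 --d 1--> P_1 --d 0--> P_0 --eps--> X -> 0 *)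
Definition is_projres (X : rmod) (P : nat -> rmod)
  (d : forall j, 'M[F]_(mdim (P j.+1), mdim (P j)))
  (eps : 'M[F]_(mdim (P 0), mdim X)) : Prop :=
  (forall j, is_projective (P j)) /\ is_mod X /\
  (forall j, is_hom (d j)) /\ is_hom eps /\ row_full eps /\
  (d 0 == kermx eps)%MS /\ (forall j, (d j.+1 == kermx (d j))%MS).

(* Ext^i(X,Y) = 0, for i >= 1, computed as H^i(Hom(P_., Y)) for a projective
   resolution P_. of X (independent of the resolution). *)
Definition Ext_vanishes (i : nat) (X Y : rmod) : Prop :=
  match i with
  | 0 => False (* only used for i >= 1 *)
  | k.+1 =>
    forall P d eps, @is_projres X P d eps ->
      forall phi : 'M[F]_(mdim (P k.+1), mdim Y),
        is_hom phi -> d k.+1 *m phi = 0 ->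
        exists psi : 'M[F]_(mdim (P k), mdim Y), is_hom psi /\ phi = d k *m psi
  end.

Definition contravariantly_finite (C : rmod -> Prop) : Prop :=
  forall M, is_mod M -> exists (C0 : rmod) (f : 'M[F]_(mdim C0, mdim M)),
    [/\ C C0, is_hom f &
      forall (C1 : rmod) (g : 'M[F]_(mdim C1, mdim M)), C C1 -> is_hom g ->
        exists h : 'M[F]_(mdim C1, mdim C0), is_hom h /\ g = h *m f].

Definition covariantly_finite (C : rmod -> Prop) : Prop :=
  forall M, is_mod M -> exists (C0 : rmod) (f : 'M[F]_(mdim M, mdim C0)),
    [/\ C C0, is_hom f &
      forall (C1 : rmod) (g : 'M[F]_(mdim M, mdim C1)), C C1 -> is_hom g ->
        exists h : 'M[F]_(mdim C0, mdim C1), is_hom h /\ g = f *m h].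

Definition functorially_finite (C : rmod -> Prop) : Prop :=
  contravariantly_finite C /\ covariantly_finite C.

Definition n_cluster_tilting (n : nat) (C : rmod -> Prop) : Prop :=
  [/\ forall X, C X -> is_mod X,
      functorially_finite C,
      (forall X, C X <-> (is_mod X /\ forall i, (0 < i < n)%N ->
                             forall Y, C Y -> Ext_vanishes i X Y))
    & (forall X, C X <-> (is_mod X /\ forall i, (0 < i < n)%N ->
                             forall Y, C Y -> Ext_vanishes i Y X))].

End QuiverModules.

Definition quiver_connected (V A : finType) (src tgt : A -> V) : Prop :=
  forall v w : V, connect
    (fun x y => [exists a : A, ((src a == x) && (tgt a == y)) ||
                               ((src a == y) && (tgt a == x))]) v w.

Definition outdeg (V A : finType) (src : A -> V) (v : V) : nat :=
  #|[set a : A | src a == v]|.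
Definition indeg (V A : finType) (tgt : A -> V) (v : V) : nat :=
  #|[set a : A | tgt a == v]|.

(* Main.v *)
Require Import Defs.
From mathcomp Require Import all_boot all_order all_algebra.
Set Implicit Arguments. Unset Strict Implicit. Unset Printing Implicit Defensive.
Import GRing.Theory.
Local Open Scope ring_scope.

Section Work.
Variables (F : fieldType) (V A : finType) (src tgt : A -> V).
Local Notation B := (V + A)%type.

Definition mul (x y : B) : option B :=
  match x, y with
  | inl v, inl w => if v == w then Some (inl v) else None
  | inl v, inr a => if v == src a then Some (inr a) else None
  | inr a, inl w => if w == tgt a then Some (inr a) else None
  | inr _, inr _ => None
  end.

Lemma mul_assoc x y z :
  obind (fun w => mul w z) (mul x y) = obind (mul x) (mul y z).
Proof.
case: x => [v|a]; case: y => [w|b]; case: z => [u|c] /=;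
  repeat (case: eqP => [?|?]; subst => /=); rewrite ?eqxx //=;
  repeat (case: eqP => //=).
Qed.

Definition lid (t : B) : V := match t with inl v => v | inr a => src a end.
Definition rid (t : B) : V := match t with inl v => v | inr a => tgt a end.

Ltac fin := rewrite /= ?eqxx ?andbT ?andbF //; try (by rewrite eq_sym).

Lemma mul_idem_r t y w : (mul t (inl y) == Some w) = (w == t) && (rid t == y).
Proof.
case: t => [v|a] /=.
  have [->|ne] := eqVneq v y; fin.
have [_|ne] := eqVneq y (tgt a); fin; try by rewrite eq_sym (negbTE ne) andbF.
Qed.

Lemma mul_idem_l y t w : (mul (inl y) t == Some w) = (w == t) && (lid t == y).
Proof.
case: t => [v|a] /=.
  have [<-|ne] := eqVneq y v; fin; try by rewrite eq_sym (negbTE ne) andbF.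
have [_|ne] := eqVneq y (src a); fin; try by rewrite eq_sym (negbTE ne) andbF.
Qed.

Lemma mul_arr_r t a w : (mul t (inr a) == Some w) = (t == inl (src a)) && (w == inr a).
Proof.
case: t => [v|b] /=; last by [].
have [->|ne] := eqVneq v (src a); fin.
suff -> : (inl v == inl (src a) :> B) = false by [].
by apply/negbTE; apply: contra ne => /eqP [->].
Qed.

Lemma mul_arr_l a t w : (mul (inr a) t == Some w) = (t == inl (tgt a)) && (w == inr a).
Proof.
case: t => [v|b] /=; last by [].
have [->|ne] := eqVneq v (tgt a); fin.
suff -> : (inl v == inl (tgt a) :> B) = false by [].
by apply/negbTE; apply: contra ne => /eqP [->].
Qed.


Definition er (T : finType) (p : T) : 'rV[F]_#|T| := delta_mx 0 (enum_rank p).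
Definition ec (T : finType) (p : T) : 'cV[F]_#|T| := delta_mx (enum_rank p) 0.

Section Fmx.
Variables T U W : finType.

Definition fmx (f : T -> U -> F) : 'M[F]_(#|T|, #|U|) :=
  \matrix_(i, j) f (enum_val i) (enum_val j).

Lemma sum_enum (R : nmodType) (g : 'I_#|T| -> R) :
  \sum_i g i = \sum_p g (enum_rank p).
Proof. by rewrite (reindex enum_rank) //; apply: onW_bij; apply: enum_rank_bij. Qed.

Lemma fmxE f p q : fmx f (enum_rank p) (enum_rank q) = f p q.
Proof. by rewrite mxE !enum_rankK. Qed.

Lemma coord_mul (v : 'rV[F]_#|T|) (f : T -> U -> F) q :
  (v *m fmx f) 0 (enum_rank q) = \sum_p v 0 (enum_rank p) * f p q.
Proof. by rewrite mxE sum_enum; apply: eq_bigr => p _; rewrite fmxE. Qed.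

Lemma fmx_rowP n (X Y : 'M[F]_(#|T|, n)) :
  (forall p : T, er p *m X = er p *m Y) -> X = Y.
Proof.
move=> H; apply/row_matrixP => i; rewrite !rowE.
by have := H (enum_val i); rewrite /er enum_valK.
Qed.

Lemma fmx_colP m (X Y : 'M[F]_(m, #|T|)) :
  (forall p : T, X *m ec p = Y *m ec p) -> X = Y.
Proof.
move=> H; apply/matrixP => i j.
have := congr1 (fun M : 'cV[F]_m => M i 0) (H (enum_val j)); rewrite /ec.
by rewrite -!colE !mxE enum_valK.
Qed.

Lemma fmx_scale a (f : T -> U -> F) : a *: fmx f = fmx (fun p q => a * f p q).
Proof. by apply/matrixP => i j; rewrite !mxE. Qed.

Lemma fmx0 : fmx (fun _ _ => 0) = 0.
Proof. by apply/matrixP => i j; rewrite !mxE. Qed.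

Lemma fmx_ext (f g : T -> U -> F) : (forall p q, f p q = g p q) -> fmx f = fmx g.
Proof. by move=> H; apply/matrixP => i j; rewrite !mxE H. Qed.

End Fmx.

Lemma fmx_mul (T U W : finType) (f : T -> U -> F) (g : U -> W -> F) :
  fmx f *m fmx g = fmx (fun p r => \sum_q f p q * g q r).
Proof.
apply/matrixP => i j; rewrite !mxE (sum_enum (fun k => _)).
by apply: eq_bigr => q _; rewrite !mxE enum_rankK.
Qed.


Lemma fmx_sum (T U I : finType) (f : I -> T -> U -> F) :
  \sum_k fmx (f k) = fmx (fun p q => \sum_k f k p q).
Proof. by apply/matrixP => i j; rewrite !mxE summxE; apply: eq_bigr => k _; rewrite mxE. Qed.

Lemma fmx1 (T : finType) : fmx (fun p q : T => (p == q)%:R) = 1%:M.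
Proof. by apply/matrixP => i j; rewrite !mxE (inj_eq enum_val_inj). Qed.

Lemma sum_pick (T : finType) (R : pzSemiRingType) (q0 : T) (g : T -> R) :
  \sum_q (q0 == q)%:R * g q = g q0.
Proof.
rewrite (bigD1 q0) //= eqxx mul1r big1 ?addr0 // => q /negbTE.
by rewrite eq_sym => ->; rewrite mul0r.
Qed.

Lemma sum_pickZ (T : finType) m n (q0 : T) (g : T -> 'M[F]_(m, n)) :
  \sum_q (q0 == q)%:R *: g q = g q0.
Proof.
rewrite (bigD1 q0) //= eqxx scale1r big1 ?addr0 // => q /negbTE.
by rewrite eq_sym => ->; rewrite scale0r.
Qed.

Lemma sum_opt (o : option B) (g : B -> F) :
  \sum_m (o == Some m)%:R * g m = oapp g 0 o.
Proof.
case: o => [m0|] /=; first by rewrite -(sum_pick m0 g).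
by rewrite big1 // => m _; rewrite mul0r.
Qed.

Lemma sum_optZ m n (o : option B) (g : B -> 'M[F]_(m, n)) :
  \sum_w (o == Some w)%:R *: g w = oapp g 0 o.
Proof.
case: o => [m0|] /=; first by rewrite -(sum_pickZ m0 g).
by rewrite big1 // => w _; rewrite scale0r.
Qed.

Lemma er_fmx (T U : finType) (f : T -> U -> F) p :
  er p *m fmx f = \sum_q f p q *: er q.
Proof.
rewrite /er.
apply/rowP => j; rewrite -rowE mxE summxE.
rewrite -(enum_valK j); set q0 := enum_val j.
rewrite mxE !enum_rankK.
rewrite (eq_bigr (fun q => (q0 == q)%:R * f p q)) ?sum_pick // => q _.
by rewrite !mxE eqxx /= (inj_eq enum_rank_inj) mulrC eq_sym.
Qed.

Lemma fmx_ec (T U : finType) (f : T -> U -> F) q :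
  fmx f *m ec q = \sum_p f p q *: ec p.
Proof.
rewrite /ec.
apply/colP => j; rewrite -colE mxE summxE.
rewrite -(enum_valK j); set q0 := enum_val j.
rewrite mxE !enum_rankK.
rewrite (eq_bigr (fun p => (q0 == p)%:R * f p q)) ?sum_pick // => p _.
by rewrite !mxE eqxx /= (inj_eq enum_rank_inj) andbT mulrC eq_sym.
Qed.


Definition act (M : rmod F V A) (s : B) : 'M[F]_(mdim M) :=
  match s with inl y => midem M y | inr a => marr M a end.

Lemma mod_table (M : rmod F V A) : is_mod src tgt M ->
  forall s t, act M s *m act M t = oapp (act M) 0 (mul s t).
Proof.
case=> He Hs Ha Hz [y|a] [z|b] /=.
- by rewrite He; case: (y == z).
- rewrite -{1}(Ha b) !mulmxA He; case: eqP => [->|_] /=; last by rewrite !mul0mx.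
  by rewrite Ha.
- rewrite -{1}(Ha a) -!mulmxA He; rewrite [tgt a == z]eq_sym. case: eqP => [?|_]; subst => /=; last by rewrite !mulmx0.
  by rewrite !mulmxA Ha.
- by rewrite Hz.
Qed.

Lemma mod_of_table (M : rmod F V A) :
  (forall s t, act M s *m act M t = oapp (act M) 0 (mul s t)) ->
  \sum_y midem M y = 1%:M -> is_mod src tgt M.
Proof.
move=> H Hs; split => //.
- by move=> v w; rewrite (H (inl v) (inl w)) /=; case: (v == w).
- move=> a; have h1 := H (inl (src a)) (inr a); have h2 := H (inr a) (inl (tgt a)).
  rewrite /= eqxx /= in h1; rewrite /= eqxx /= in h2; by rewrite h1 h2.
- by move=> a b; rewrite (H (inr a) (inr b)).
Qed.

Lemma is_homE (M N : rmod F V A) (H : 'M[F]_(mdim M, mdim N)) :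
  is_hom H <-> forall s, act M s *m H = H *m act N s.
Proof.
split; first by case=> h1 h2 [y|a] /=.
by move=> h; split => [y|a]; [apply: (h (inl y)) | apply: (h (inr a))].
Qed.

Lemma hom_mul (M N P : rmod F V A) (H1 : 'M[F]_(mdim M, mdim N)) (H2 : 'M[F]_(mdim N, mdim P)) :
  is_hom H1 -> is_hom H2 -> is_hom (H1 *m H2).
Proof.
move=> /is_homE h1 /is_homE h2; apply/is_homE => s.
by rewrite mulmxA h1 -mulmxA h2 mulmxA.
Qed.

Lemma hom_add (M N : rmod F V A) (H1 H2 : 'M[F]_(mdim M, mdim N)) :
  is_hom H1 -> is_hom H2 -> is_hom (H1 + H2).
Proof.
move=> /is_homE h1 /is_homE h2; apply/is_homE => s.
by rewrite mulmxDr mulmxDl h1 h2.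
Qed.

Lemma hom_opp (M N : rmod F V A) (H1 : 'M[F]_(mdim M, mdim N)) :
  is_hom H1 -> is_hom (- H1).
Proof.
move=> /is_homE h1; apply/is_homE => s.
by rewrite mulmxN mulNmx h1.
Qed.

Lemma hom1 (M : rmod F V A) : is_hom (1%:M : 'M[F]_(mdim M)).
Proof. by apply/is_homE => s; rewrite mulmx1 mul1mx. Qed.

Definition tmod (T : finType) (f : B -> T -> T -> F) : rmod F V A :=
  @RMod F V A #|T| (fun y => fmx (f (inl y))) (fun a => fmx (f (inr a))).

Lemma act_tmod (T : finType) (f : B -> T -> T -> F) s : act (tmod f) s = fmx (f s).
Proof. by case: s. Qed.

Lemma tmod_mod (T : finType) (f : B -> T -> T -> F) :
  (forall s t p q, \sum_u f s p u * f t u q = oapp (fun w => f w p q) 0 (mul s t)) ->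
  (forall p q, \sum_y f (inl y) p q = (p == q)%:R) -> is_mod src tgt (tmod f).
Proof.
move=> Ht Hu; apply: mod_of_table => [s t|].
  rewrite !act_tmod fmx_mul (fmx_ext (Ht s t)).
  by case: (mul s t) => [w|] /=; [rewrite act_tmod | rewrite fmx0].
rewrite /= (fmx_sum (fun y => f (inl y))) (fmx_ext Hu).
exact: fmx1.
Qed.


Lemma sum_pair (R : nmodType) r (g : 'I_r * B -> R) :
  \sum_q g q = \sum_k \sum_m g (k, m).
Proof. by rewrite pair_bigA; apply: eq_bigr => -[]. Qed.

Lemma oapp_eqR (o : option B) (h : B -> option B) x :
  oapp (fun m => (h m == Some x)%:R) (0 : F) o = (obind h o == Some x)%:R.
Proof. by case: o. Qed.

Definition actF r (s : B) (p q : 'I_r * B) : F :=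
  ((p.1 == q.1) && (mul p.2 s == Some q.2))%:R.
Arguments actF : clear implicits.

Definition Fr r := tmod (actF r).

Lemma Fr_mod r : is_mod src tgt (Fr r).
Proof.
apply: tmod_mod => [s t p q|p q].
  rewrite sum_pair.
  rewrite (eq_bigr (fun k => (p.1 == k)%:R *
     \sum_m (mul p.2 s == Some m)%:R * actF r t (k, m) q)); last first.
    move=> k _; rewrite mulr_sumr; apply: eq_bigr => m _.
    by rewrite /actF /= -mulnb natrM mulrA.
  rewrite sum_pick sum_opt /actF /=.
  case: (p.1 == q.1) => /=; last by case: (mul p.2 s); case: (mul s t).
  by rewrite !oapp_eqR mul_assoc.
rewrite (eq_bigr (fun y => (rid p.2 == y)%:R * ((p.1 == q.1) && (q.2 == p.2))%:R)).
  rewrite sum_pick; case: p => p1 p2; case: q => q1 q2 /=.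
  by rewrite xpair_eqE [p2 == q2]eq_sym.
move=> y _; rewrite /actF mul_idem_r.
by case: (p.1 == q.1); case: (q.2 == p.2); case: (rid p.2 == y);
  rewrite /= ?mulr1 ?mulr0 ?mul0r ?mul1r.
Qed.

Definition hgen (M : rmod F V A) r (G : 'M[F]_(r, mdim M)) : 'M[F]_(mdim (Fr r), mdim M) :=
  \matrix_(k < #|{: 'I_r * B}|) (row (enum_val k).1 G *m act M (enum_val k).2).

Lemma er_hgen (M : rmod F V A) r (G : 'M[F]_(r, mdim M)) p :
  er p *m hgen G = row p.1 G *m act M p.2.
Proof. by rewrite /er -rowE rowK enum_rankK. Qed.

Lemma hgen_hom (M : rmod F V A) r (G : 'M[F]_(r, mdim M)) :
  is_mod src tgt M -> is_hom (hgen G).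
Proof.
move=> HM; apply/is_homE => s; apply: fmx_rowP => p.
rewrite act_tmod mulmxA er_fmx mulmx_suml mulmxA er_hgen -mulmxA (mod_table HM).
under eq_bigr do rewrite -scalemxAl er_hgen.
rewrite sum_pair.
rewrite (eq_bigr (fun k => (p.1 == k)%:R *:
     \sum_m (mul p.2 s == Some m)%:R *: (row k G *m act M m))); last first.
  move=> k _; rewrite scaler_sumr; apply: eq_bigr => m _.
  by rewrite /actF /= -mulnb natrM scalerA.
rewrite sum_pickZ sum_optZ.
by case: (mul p.2 s) => [w|] /=; rewrite ?mulmx0.
Qed.

Lemma gen_sub_hgen (M : rmod F V A) r (G : 'M[F]_(r, mdim M)) :
  is_mod src tgt M -> (G <= hgen G)%MS.
Proof.
move=> HM; case: (HM) => _ Hs _ _.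
apply/row_subP => i.
have -> : row i G = (\sum_y er (i, inl y)) *m hgen G.
  rewrite mulmx_suml; under eq_bigr do rewrite er_hgen /=.
  by rewrite -mulmx_sumr Hs mulmx1.
exact: submxMl.
Qed.

Lemma hgen_sub (M : rmod F V A) r (G : 'M[F]_(r, mdim M)) :
  (forall s, (G *m act M s <= G)%MS) -> (hgen G <= G)%MS.
Proof.
move=> H; apply/row_subP => k; rewrite rowK.
exact: submx_trans (submxMr _ (row_sub _ _)) (H _).
Qed.

Lemma gen1_act r (i : 'I_r) t :
  \sum_y er (i, inl y) *m act (Fr r) t = er (i, t).
Proof.
rewrite act_tmod; under eq_bigr do rewrite er_fmx.
rewrite exchange_big /=.
rewrite (eq_bigr (fun q => ((i, t) == q)%:R *: er q)) ?sum_pickZ //.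
move=> q _; rewrite -scaler_suml; congr (_ *: _).
rewrite (eq_bigr (fun y => (lid t == y)%:R * ((i == q.1) && (q.2 == t))%:R)).
  by rewrite sum_pick; case: q => q1 q2 /=; rewrite xpair_eqE [t == q2]eq_sym.
move=> y _; rewrite /actF /= mul_idem_l.
by case: (i == q.1); case: (q.2 == t); case: (lid t == y);
  rewrite /= ?mulr1 ?mulr0 ?mul0r ?mul1r.
Qed.

Lemma Fr_proj r : is_projective src tgt (Fr r).
Proof.
split; first exact: Fr_mod.
move=> M N g h HM HN Hg Hfull Hh.
pose G' : 'M[F]_(r, mdim M) := \matrix_i ((\sum_y er (i, inl y) *m h) *m pinvmx g).
exists (hgen G'); split; first exact: hgen_hom.
apply: fmx_rowP => -[i t].
rewrite mulmxA er_hgen rowK /= -mulmxA.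
move/is_homE: Hg => Hg; rewrite Hg mulmxA mulmxKpV; last exact: submx_full.
rewrite mulmx_suml; move/is_homE: Hh => Hh.
under eq_bigr do rewrite -mulmxA -Hh mulmxA.
by rewrite -mulmx_suml gen1_act.
Qed.


Definition actD (s : B) (p q : B) : F := (mul s q == Some p)%:R.
Definition DL := tmod actD.

Lemma DL_mod : is_mod src tgt DL.
Proof.
apply: tmod_mod => [s t p q|p q].
  under eq_bigr do rewrite mulrC.
  rewrite sum_opt /actD (oapp_eqR _ (mul s)).
  rewrite (oapp_eqR _ (fun w => mul w q)).
  by rewrite mul_assoc.
rewrite (eq_bigr (fun y => (lid q == y)%:R * (p == q)%:R)) ?sum_pick //.
move=> y _; rewrite /actD mul_idem_l.
by case: (p == q); case: (lid q == y); rewrite /= ?mulr1 ?mulr0 ?mul0r ?mul1r.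
Qed.

Section Sub.
Variables (M : rmod F V A) (m : nat) (D : 'M[F]_(m, mdim M)).
Local Notation R := (row_base D).

Definition subm : rmod F V A :=
  @RMod F V A (\rank D) (fun y => R *m midem M y *m pinvmx R)
    (fun a => R *m marr M a *m pinvmx R).

Lemma act_subm s : act subm s = R *m act M s *m pinvmx R.
Proof. by case: s. Qed.

Lemma rbK : R *m pinvmx R = 1%:M.
Proof.
apply: (row_free_inj (row_base_free D)).
by rewrite mul1mx mulmxKpV.
Qed.

Hypothesis HM : is_mod src tgt M.
Hypothesis stab : forall s, (D *m act M s <= D)%MS.

Lemma stabR s : (R *m act M s <= R)%MS.
Proof. by rewrite (eqmxMr _ (eq_row_base D)) (eq_row_base D); exact: stab. Qed.

Lemma subm_mod : is_mod src tgt subm.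
Proof.
apply: mod_of_table => [s t|].
  rewrite !act_subm (mulmxA (R *m act M s *m pinvmx R) (R *m act M t) (pinvmx R)) (mulmxA (R *m act M s *m pinvmx R) R (act M t)) (mulmxKpV (stabR s)) -(mulmxA R (act M s)) (mod_table HM).
  by case: (mul s t) => [w|] /=; rewrite ?act_subm ?mulmx0 ?mul0mx.
case: HM => _ Hs _ _.
rewrite /= -mulmx_suml -mulmx_sumr Hs mulmx1; exact: rbK.
Qed.

Lemma hom_to_subm (Q : rmod F V A) (X : 'M[F]_(mdim Q, mdim M)) :
  is_hom X -> (X <= D)%MS -> @is_hom F V A Q subm (X *m pinvmx R).
Proof.
move=> /is_homE hX XD; apply/is_homE => s.
have XR : (X <= R)%MS by rewrite eq_row_base.
by rewrite act_subm (mulmxA (X *m pinvmx R) (R *m act M s) (pinvmx R)) (mulmxA (X *m pinvmx R) R (act M s)) (mulmxKpV XR) (mulmxA (act Q s) X) hX.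
Qed.

End Sub.

Lemma lift (P M1 M2 : rmod F V A) (d : 'M[F]_(mdim M1, mdim M2))
    (h : 'M[F]_(mdim P, mdim M2)) :
  is_projective src tgt P -> is_mod src tgt M1 -> is_mod src tgt M2 ->
  is_hom d -> is_hom h -> (h <= d)%MS ->
  exists l : 'M[F]_(mdim P, mdim M1), is_hom l /\ h = l *m d.
Proof.
move=> HP HM1 HM2 Hd Hh hd.
have stab : forall s, (d *m act M2 s <= d)%MS.
  by move=> s; move/is_homE: Hd => Hd; rewrite -Hd; exact: submxMl.
have NM := subm_mod HM2 stab.
have dR : (d <= row_base d)%MS by rewrite eq_row_base.
have hR : (h <= row_base d)%MS by rewrite eq_row_base.
have Hg := hom_to_subm Hd (submx_refl d).
have Hh' := hom_to_subm Hh hd.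
have Hfull : row_full (d *m pinvmx (row_base d)).
  rewrite -sub1mx -(rbK d).
  have : (row_base d <= d)%MS by rewrite eq_row_base.
  case/submxP => z ->; rewrite -mulmxA; exact: submxMl.
case: HP => _ HPl.
have [l [Hl E]] := HPl _ _ _ _ HM1 NM Hg Hfull Hh'.
exists l; split => //.
by rewrite -(mulmxKpV hR) E -mulmxA (mulmxKpV dR).
Qed.


Lemma step (Pk Pk1 Pkm : rmod F V A) (a : 'M[F]_(mdim Pk1, mdim Pk))
    (b : 'M[F]_(mdim Pk, mdim Pkm)) (t : 'M[F]_(mdim Pkm, mdim Pk)) :
  is_projective src tgt Pk -> is_mod src tgt Pk1 -> is_hom a -> is_hom b -> is_hom t ->
  (a == kermx b)%MS -> b *m t *m b = b ->
  exists s : 'M[F]_(mdim Pk, mdim Pk1),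
    [/\ is_hom s, s *m a = 1%:M - b *m t & a *m s *m a = a].
Proof.
move=> HP HM1 Ha Hb Ht /andP[ak ka] btb.
have HPm : is_mod src tgt Pk by case: HP.
have Hh : is_hom (1%:M - b *m t) by apply: hom_add; [exact: hom1 | apply: hom_opp; exact: hom_mul].
have hk : ((1%:M - b *m t) <= a)%MS.
  apply: submx_trans ka; apply/sub_kermxP.
  by rewrite mulmxBl mul1mx btb subrr.
have [s [Hs E]] := lift HP HM1 HPm Ha Hh hk.
have ab : a *m b = 0 by apply/sub_kermxP.
exists s; split => //.
by rewrite -mulmxA -E mulmxBr mulmx1 mulmxA ab mul0mx subr0.
Qed.

Lemma ext_proj (X Y : rmod F V A) i :
  is_projective src tgt X -> (0 < i)%N -> Ext_vanishes src tgt i X Y.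
Proof.
move=> HXp; case: i => // k _ P d eps [HP [HX [Hd [He [Hfull [H0 Hs]]]]]] phi Hphi Hz.
have HPm : forall j, is_mod src tgt (P j) by move=> j; case: (HP j).
have [t0 [Ht0 E0]] : exists t0 : 'M[F]_(mdim X, mdim (P 0)), is_hom t0 /\ 1%:M = t0 *m eps.
  by apply: (lift HXp (HPm 0%N) HX He (hom1 X)); rewrite sub1mx.
have S : forall j, exists s : 'M[F]_(mdim (P j), mdim (P j.+1)),
    is_hom s /\ d j *m s *m d j = d j.
  elim => [|j [s [Hs1 Hs2]]].
    have e0 : eps *m t0 *m eps = eps by rewrite -mulmxA -E0 mulmx1.
    have [s [Hs1 _ Hs3]] := step (HP 0%N) (HPm 1%N) (Hd 0%N) He Ht0 H0 e0.
    by exists s.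
  have [s' [Hs'1 _ Hs'3]] := step (HP j.+1) (HPm j.+2) (Hd j.+1) (Hd j) Hs1 (Hs j) Hs2.
  by exists s'.
have [s [Hs1 Hs2]] := S k.
have [s' [Hs'1 E _]] := step (HP k.+1) (HPm k.+2) (Hd k.+1) (Hd k) Hs1 (Hs k) Hs2.
exists (s *m phi); split; first exact: hom_mul.
have -> : d k *m (s *m phi) = (1%:M - s' *m d k.+1) *m phi.
  by rewrite E mulmxA opprB addrC subrK.
by rewrite mulmxBl mul1mx -mulmxA Hz mulmx0 subr0.
Qed.

Definition one : 'cV[F]_#|{: B}| := \sum_y ec (inl y : B).

Lemma actD_one q : fmx (actD q) *m one = ec q.
Proof.
rewrite /one mulmx_sumr; under eq_bigr do rewrite fmx_ec.
rewrite exchange_big /=.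
rewrite (eq_bigr (fun p => (q == p)%:R *: ec p)) ?sum_pickZ //.
move=> p _; rewrite -scaler_suml; congr (_ *: _).
rewrite (eq_bigr (fun y => (rid q == y)%:R * (q == p)%:R)) ?sum_pick //.
move=> y _; rewrite /actD mul_idem_r [p == q]eq_sym.
by case: (q == p); case: (rid q == y); rewrite /= ?mulr1 ?mulr0 ?mul0r ?mul1r.
Qed.

Lemma DL_inj (M1 M2 : rmod F V A) (d : 'M[F]_(mdim M1, mdim M2))
    (phi : 'M[F]_(mdim M1, mdim DL)) :
  is_mod src tgt M1 -> is_mod src tgt M2 -> is_hom d -> is_hom phi ->
  (kermx d <= kermx phi)%MS ->
  exists psi : 'M[F]_(mdim M2, mdim DL), is_hom psi /\ phi = d *m psi.
Proof.
move=> HM1 HM2 Hd Hphi Hk.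
pose f := phi *m one.
have [g Eg] : exists g : 'cV[F]_(mdim M2), f = d *m g.
  have K : ((cokermx d^T)^T <= kermx d)%MS.
    apply/sub_kermxP.
    have : (d^T *m cokermx d^T)^T = 0 by rewrite mulmx_coker trmx0.
    by rewrite trmx_mul trmxK.
  have K2 : (cokermx d^T)^T *m f = 0.
    by rewrite /f mulmxA; move/sub_kermxP: (submx_trans K Hk) => ->; rewrite mul0mx.
  have : (f^T <= d^T)%MS.
    by rewrite submxE -(trmxK (f^T *m _)) trmx_mul trmxK K2 trmx0.
  case/submxP => z Ez; exists z^T.
  by rewrite -(trmxK f) Ez trmx_mul trmxK.
pose psi : 'M[F]_(mdim M2, #|{: B}|) := \matrix_(i, k) (act M2 (enum_val k) *m g) i 0.
have psiE : forall q, psi *m ec q = act M2 q *m g.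
  by move=> q; rewrite /ec -colE; apply/colP => i; rewrite !mxE enum_rankK.
exists psi; split.
  apply/is_homE => s; apply: fmx_colP => q.
  rewrite -mulmxA psiE mulmxA (mod_table HM2) act_tmod -mulmxA fmx_ec mulmx_sumr.
  under eq_bigr do rewrite -scalemxAr psiE.
  rewrite /actD sum_optZ.
  by case: (mul s q) => [w|] /=; rewrite ?mul0mx.
apply: fmx_colP => q.
rewrite -mulmxA psiE mulmxA.
move/is_homE: Hd => Hd; rewrite -Hd -mulmxA -Eg /f mulmxA.
move/is_homE: Hphi => Hphi; rewrite Hphi -mulmxA.
by rewrite act_tmod actD_one.
Qed.

Lemma ext_DL (Y : rmod F V A) i : (0 < i)%N -> Ext_vanishes src tgt i Y DL.
Proof.
case: i => // k _ P d eps [HP [HX [Hd [He [Hfull [H0 Hs]]]]]] phi Hphi Hz.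
have HPm : forall j, is_mod src tgt (P j) by move=> j; case: (HP j).
apply: (DL_inj (HPm k.+1) (HPm k) (Hd k) Hphi).
case/andP: (Hs k) => _ kd.
apply: submx_trans kd _; apply/sub_kermxP; exact: Hz.
Qed.


Lemma er_ec (T : finType) (p q : T) : er p *m ec q = ((p == q)%:R)%:M.
Proof.
apply/matrixP => i j; rewrite !ord1 !mxE.
rewrite (bigD1 (enum_rank p)) //= big1 => [|k /negbTE kp].
  rewrite !mxE !eqxx /= mul1r addr0 (inj_eq enum_rank_inj) mulr1n. by rewrite andbT.
by rewrite /er !mxE kp /= mul0r.
Qed.

Lemma er_actF r (p : 'I_r * B) s :
  er p *m act (Fr r) s = oapp (fun w => er (p.1, w)) 0 (mul p.2 s).
Proof.
rewrite act_tmod er_fmx sum_pair.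
rewrite (eq_bigr (fun i => (p.1 == i)%:R *:
     \sum_m (mul p.2 s == Some m)%:R *: er (i, m))); last first.
  move=> k _; rewrite scaler_sumr; apply: eq_bigr => m _.
  by rewrite /actF /= -mulnb natrM scalerA.
by rewrite sum_pickZ sum_optZ.
Qed.

Lemma actF_ec r s (k : 'I_r * B) :
  act (Fr r) s *m ec k = \sum_t (mul t s == Some k.2)%:R *: ec (k.1, t).
Proof.
rewrite act_tmod fmx_ec sum_pair.
rewrite (eq_bigr (fun i => (k.1 == i)%:R *:
     \sum_t (mul t s == Some k.2)%:R *: ec (i, t))); last first.
  move=> i _; rewrite scaler_sumr; apply: eq_bigr => t _.
  by rewrite /actF /= -mulnb natrM scalerA eq_sym.
by rewrite sum_pickZ.
Qed.

Definition eps0 : 'M[F]_(mdim (Fr (mdim DL)), mdim DL) := hgen (1%:M : 'M[F]_(mdim DL)).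

Fixpoint rr (j : nat) : nat :=
  match j with 0 => mdim DL | j'.+1 => mdim (Fr (rr j')) end.

Definition PP j := Fr (rr j).

Fixpoint dd (j : nat) : 'M[F]_(mdim (PP j.+1), mdim (PP j)) :=
  match j as j0 return 'M[F]_(mdim (PP j0.+1), mdim (PP j0)) with
  | 0 => hgen (kermx eps0)
  | j'.+1 => hgen (kermx (dd j'))
  end.

Lemma ker_stab (M N : rmod F V A) (h : 'M[F]_(mdim M, mdim N)) :
  is_hom h -> forall s, (kermx h *m act M s <= kermx h)%MS.
Proof.
move=> /is_homE Hh s; apply/sub_kermxP.
by rewrite -mulmxA Hh mulmxA (sub_kermxP (submx_refl _)) mul0mx.
Qed.

Lemma hgen_eq (M : rmod F V A) r (G : 'M[F]_(r, mdim M)) :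
  is_mod src tgt M -> (forall s, (G *m act M s <= G)%MS) -> (hgen G == G)%MS.
Proof. by move=> HM H; apply/andP; split; [exact: hgen_sub | exact: gen_sub_hgen]. Qed.

Lemma dd_hom j : is_hom (dd j).
Proof. by case: j => [|j] /=; apply: hgen_hom; apply: Fr_mod. Qed.

Lemma projres0 : is_projres src tgt dd eps0.
Proof.
have He : is_hom eps0 by apply: hgen_hom; exact: DL_mod.
split; first by move=> j; exact: Fr_proj.
split; first exact: DL_mod.
split; first exact: dd_hom.
split; first exact: He.
split; first by rewrite -sub1mx; apply: gen_sub_hgen; exact: DL_mod.
split; first by apply: hgen_eq; [exact: Fr_mod | exact: ker_stab].
move=> j; apply: (@hgen_eq (PP j.+1) _ (kermx (dd j))); [exact: Fr_mod | apply: ker_stab; exact: dd_hom].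
Qed.


Lemma sum_arr_r m n c w (g : B -> 'M[F]_(m, n)) :
  \sum_t (mul t (inr c) == Some w)%:R *: g t = (w == inr c)%:R *: g (inl (src c)).
Proof.
rewrite (eq_bigr (fun t => (inl (src c) == t)%:R *: ((w == inr c)%:R *: g t))) ?sum_pickZ //.
move=> t _; rewrite mul_arr_r scalerA [inl _ == t]eq_sym.
by case: (t == _); case: (w == _); rewrite /= ?mulr1 ?mulr0 ?mul0r ?mul1r.
Qed.

Lemma er_DL_arr (a c : A) :
  er (inr a : B) *m act DL (inr c) = (inr a == inr c :> B)%:R *: er (inl (tgt c) : B).
Proof.
rewrite act_tmod er_fmx.
rewrite (eq_bigr (fun q => (inl (tgt c) == q)%:R *: ((inr a == inr c :> B)%:R *: er q))) ?sum_pickZ //.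
move=> q _; rewrite /actD mul_arr_l scalerA [inl _ == q]eq_sym.
by case: (q == _); case: (_ == _); rewrite /= ?mulr1 ?mulr0 ?mul0r ?mul1r.
Qed.

Lemma key (a a' b : A) : a != a' -> a != b -> tgt a = tgt a' -> src b = src a ->
  ~ Ext_vanishes src tgt 1 DL (Fr 1).
Proof.
move=> aa' ab ta sb Hext.
pose ia : 'I_(mdim DL) := enum_rank (inr a : B).
pose ia' : 'I_(mdim DL) := enum_rank (inr a' : B).
pose k : 'I_(rr 0) * B := (ia, inr b).
pose kY : 'I_1 * B := (ord0, inr b).
pose Pi : 'M[F]_(mdim (PP 0), mdim (Fr 1)) := ec k *m er kY.
have [_ [_ [_ [He [_ [H0 _]]]]]] := projres0.
have epsE : forall (i : 'I_(mdim DL)) t,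
    er (i, t) *m eps0 = er (enum_val i) *m act DL t.
  by move=> i t; rewrite er_hgen row1 /er enum_valK.
have eps_col : eps0 *m ec (inr a : B) = ec (ia, inl (src a)).
  apply: fmx_rowP => -[i t].
  rewrite mulmxA epsE -mulmxA act_tmod fmx_ec.
  rewrite (eq_bigr (fun q => (inr a == q)%:R *: ((t == inl (src a))%:R *: ec q))).
    rewrite sum_pickZ -scalemxAr !er_ec scale_scalar_mx -natrM mulnb.
    by rewrite xpair_eqE /ia (can2_eq (@enum_valK _) (@enum_rankK _)) andbC.
  move=> q _; rewrite /actD mul_arr_r scalerA [inr a == q]eq_sym.
  by case: (t == _); case: (q == _); rewrite /= ?mulr1 ?mulr0 ?mul0r ?mul1r.
have hPi : forall u : 'rV[F]_(mdim (PP 0)), u *m eps0 = 0 ->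
    forall s, u *m act (PP 0) s *m Pi = u *m Pi *m act (Fr 1) s.
  move=> u ue s; rewrite /Pi !mulmxA -(mulmxA (u *m ec k)) er_actF /=.
  rewrite -(mulmxA u) actF_ec mulmx_sumr.
  under eq_bigr do rewrite -scalemxAr.
  case: s => [y|c] /=.
    rewrite (eq_bigr (fun t => (inr b == t)%:R *: ((tgt b == y)%:R *: (u *m ec (k.1, t))))).
      rewrite sum_pickZ -scalemxAl [y == _]eq_sym.
      by case: (tgt b == y); rewrite ?scale1r ?scale0r ?mul0mx ?mulmx0.
    move=> t _; rewrite mul_idem_r scalerA /=.
    by case: eqP => [<-|] /=; rewrite ?mul1r ?mul0r.
  rewrite sum_arr_r mulmx0 /=.
  have [<-|] := eqVneq b c; last by move=> /negbTE nc; rewrite (inj_eq (@inr_inj _ _)) nc scale0r mul0mx.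
  rewrite sb -eps_col mulmxA ue mul0mx scaler0 mul0mx //.
have Hphi : is_hom (dd 0 *m Pi).
  apply/is_homE => s; move/is_homE: (dd_hom 0) => Hd.
  rewrite mulmxA Hd; apply/row_matrixP => i; rewrite !row_mul.
  apply: hPi; apply/sub_kermxP.
  by apply: submx_trans (row_sub i _) _; case/andP: H0.
have Hz : dd 1 *m (dd 0 *m Pi) = 0.
  have [_ [_ [_ [_ [_ [_ Hs]]]]]] := projres0.
  case/andP: (Hs 0%N) => /sub_kermxP h _; by rewrite mulmxA h mul0mx.
have [psi [Hpsi Ephi]] := Hext PP dd eps0 projres0 (dd 0 *m Pi) Hphi Hz.
have omega : forall w : 'rV[F]_(mdim (PP 0)), w *m eps0 = 0 -> w *m Pi = w *m psi.
  move=> w /sub_kermxP wk; case/andP: H0 => _ kd.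
  have /submxP [z ->] := submx_trans wk kd.
  by rewrite -!mulmxA Ephi.
move/is_homE: Hpsi => Hpsi.
pose z1 := er (ia, inl (src a)) *m psi.
have E1 : z1 *m ec (ord0, inl (src a) : B) = 1%:M.
  have w1 : er k *m eps0 = 0.
    rewrite epsE /ia enum_rankK er_DL_arr.
    by rewrite (inj_eq (@inr_inj _ _)) (negbTE ab) scale0r.
  have := congr1 (mulmx^~ (ec kY)) (omega _ w1).
  rewrite /Pi mulmxA er_ec eqxx mul1mx -mulmxA er_ec eqxx.
  have -> : er k = er (ia, inl (src a)) *m act (PP 0) (inr b).
    by rewrite er_actF /= sb eqxx.
  rewrite mulmxA -(mulmxA (er _)) Hpsi mulmxA -/z1 -mulmxA actF_ec sum_arr_r eqxx scale1r /= sb.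
  by move=> <-.
pose z2 := er (ia', inl (src a')) *m psi.
have w2 : (er (ia, inr a) - er (ia', inr a')) *m eps0 = 0.
  rewrite mulmxBl !epsE /ia /ia' !enum_rankK !er_DL_arr !eqxx ta.
  by rewrite subrr.
have := congr1 (mulmx^~ (ec (ord0, inr a : B))) (omega _ w2).
rewrite /Pi -mulmxA -(mulmxA (ec k)) er_ec.
have -> : (kY == (ord0, inr a)) = false.
  by rewrite xpair_eqE eqxx /= (inj_eq (@inr_inj _ _)) eq_sym (negbTE ab).
have -> : er (ia, inr a) = er (ia, inl (src a)) *m act (PP 0) (inr a).
  by rewrite er_actF /= eqxx.
have -> : er (ia', inr a') = er (ia', inl (src a')) *m act (PP 0) (inr a').
  by rewrite er_actF /= eqxx.
have L1 : er (ia, inl (src a)) *m act (PP 0) (inr a) *m psi *m ec (ord0, inr a : B) = 1%:M.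
  by rewrite -(mulmxA (er _)) Hpsi mulmxA -/z1 -mulmxA actF_ec sum_arr_r eqxx scale1r /= E1.
have L2 : er (ia', inl (src a')) *m act (PP 0) (inr a') *m psi *m ec (ord0, inr a : B) = 0.
  rewrite -(mulmxA (er _)) Hpsi mulmxA -mulmxA actF_ec sum_arr_r.
  by rewrite (inj_eq (@inr_inj _ _)) (negbTE aa') scale0r mulmx0.
have f0 : (false%:R : F) = 0 by [].
rewrite !mulmxBl L1 L2 subr0.
rewrite mul_mx_scalar f0 scale0r !mulmx0 subrr.
move/matrixP/(_ 0 0); rewrite !mxE eqxx /=.
by move/eqP; rewrite eq_sym oner_eq0.
Qed.

End Work.

Lemma card_one (T : finType) (P : pred T) (x : T) :
  P x -> (forall y, P y -> y = x) -> #|[set y | P y]| = 1%N.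
Proof.
move=> Px H.
have -> : [set y | P y] = [set x].
  by apply/setP => y; rewrite !inE; apply/idP/eqP => [/H|->].
exact: cards1.
Qed.

Theorem lemma2p4 (F : fieldType) (V A : finType) (src tgt : A -> V)
  (n : nat) (C : rmod F V A -> Prop) :
  quiver_connected src tgt -> (2 <= n)%N ->
  n_cluster_tilting src tgt n C ->
  (forall a1 a2 : A, a1 != a2 -> tgt a1 = tgt a2 ->
     outdeg src (src a1) = 1%N /\ outdeg src (src a2) = 1%N) /\
  (forall a1 a2 : A, a1 != a2 -> src a1 = src a2 ->
     indeg tgt (tgt a1) = 1%N /\ indeg tgt (tgt a2) = 1%N).
Proof.
move=> _ n2 [HCmod _ HC3 HC4].
have h1n : (0 < 1 < n)%N by apply/andP; split.
have nc : forall a a' b : A, a != a' -> a != b -> tgt a = tgt a' -> src b = src a -> False.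
  move=> a a' b e1 e2 e3 e4.
  have CFr : C (Fr F src tgt 1).
    apply/HC3; split; first exact: Fr_mod.
    move=> i /andP[i0 _] Y _; apply: ext_proj => //; exact: Fr_proj.
  have CDL : C (DL F src tgt).
    apply/HC4; split; first exact: DL_mod.
    move=> i /andP[i0 _] Y _; exact: (ext_DL src tgt Y i0).
  have := (proj2 (proj1 (HC3 _) CDL)) 1%N h1n _ CFr.
  exact: (key e1 e2 e3 e4).
split.
  move=> a1 a2 ne et; split; rewrite /outdeg.
    apply: card_one => // y /eqP sy; apply/eqP; apply/negPn/negP => ny.
    by apply: (nc a1 a2 y ne) => //; rewrite eq_sym.
  apply: card_one => // y /eqP sy; apply/eqP; apply/negPn/negP => ny.
  by apply: (nc a2 a1 y) => //; rewrite eq_sym.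
move=> a1 a2 ne es; split; rewrite /indeg.
  apply: card_one => // y /eqP ty; apply/eqP; apply/negPn/negP => ny.
  by apply: (nc a1 y a2) => //; rewrite eq_sym.
apply: card_one => // y /eqP ty; apply/eqP; apply/negPn/negP => ny.
by apply: (nc a2 y a1) => //; rewrite eq_sym.
Qed.
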